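(* Let $(M,d)$ be a pointed metric space and let $\nu\in ba(\widetilde M)$. Then there exists a positive $\mu\in ba(\widetilde M)$ with $\Phi^*\mu=\Phi^*\nu$ and $\|\mu\|=\|\nu\|$. Consequently, for every $F\in\mathrm{Lip}_0(M)^*$ there exists a positive $\mu\in ba(\widetilde M)$ with $\Phi^*\mu=F$ and $\|\mu\|=\|F\|$.
   Context: $(M,d)$ is a metric space with base point $0$; $\mathrm{Lip}_0(M)$ is the real Banach space of Lipschitz $f\colon M\to\mathbb R$ with $f(0)=0$, normed by the best Lipschitz constant. $\widetilde M=\{(x,y)\in M\times M: x\neq y\}$. $ba(\widetilde M)$ is the Banach space of bounded finitely additive signed measures on the power set of $\widetilde M$, with norm $\|\mu\|=|\mu|(\widetilde M)$. The de Leeuw map $\Phi\colon\mathrm{Lip}_0(M)\to\ell_\infty(\widetilde M)$, $\Phi f(x,y)=(f(x)-f(y))/d(x,y)$, is a linear isometry; $\Phi^*\mu\in \mathrm{Lip}_0(M)^*$ denotes $(\Phi^*\mu)(f)=\int_{\widetilde M}\Phi f\,d\mu$. *)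

(* Defs.v *)
From mathcomp Require Import all_boot all_order all_algebra.
From mathcomp Require Import boolp classical_sets reals.
Set Implicit Arguments. Unset Strict Implicit. Unset Printing Implicit Defensive.
Import Order.TTheory GRing.Theory Num.Theory.
Local Open Scope classical_set_scope.
Local Open Scope ring_scope.

Section Defs.
Variable R : realType.

Definition is_metric (M : Type) (d : M -> M -> R) : Prop :=
  (forall x y, d x y = 0 <-> x = y) /\
  (forall x y, d x y = d y x) /\
  (forall x y z, d x z <= d x y + d y z).

Definition Mtilde (M : Type) := {p : M * M | p.1 <> p.2}.

Definition lipschitz (M : Type) (d : M -> M -> R) (f : M -> R) : Prop :=
  exists L : R, forall x y, `|f x - f y| <= L * d x y.

Definition Lip0 (M : Type) (d : M -> M -> R) (x0 : M) (f : M -> R) : Prop :=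
  lipschitz d f /\ f x0 = 0.

Definition lipnorm (M : Type) (d : M -> M -> R) (f : M -> R) : R :=
  sup [set r | exists x y, x <> y /\ r = `|f x - f y| / d x y].

Definition deLeeuw (M : Type) (d : M -> M -> R) (f : M -> R) : Mtilde M -> R :=
  fun p => (f (sval p).1 - f (sval p).2) / d (sval p).1 (sval p).2.

Definition is_partition (T : Type) (s : seq (set T)) : Prop :=
  (forall i j, (i < j)%N -> (j < size s)%N -> nth set0 s i `&` nth set0 s j = set0) /\
  \big[setU/set0]_(A <- s) A = setT.

Definition is_ba (T : Type) (mu : set T -> R) : Prop :=
  mu set0 = 0 /\
  (forall A B, A `&` B = set0 -> mu (A `|` B) = mu A + mu B) /\
  (exists C : R, forall A, `|mu A| <= C).

Definition positive_measure (T : Type) (mu : set T -> R) : Prop :=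
  forall A, 0 <= mu A.

Definition ba_norm (T : Type) (mu : set T -> R) : R :=
  sup [set r | exists s : seq (set T), is_partition s /\
                 r = \sum_(A <- s) `|mu A|].

(** I is the integral of the bounded function g w.r.t. mu: limit of the
   integrals of simple functions converging uniformly to g.  A simple
   function is given as a list of (value, set) with the sets forming a
   partition. *)
Definition is_ba_integral (T : Type) (mu : set T -> R) (g : T -> R) (I : R) : Prop :=
  forall eps : R, 0 < eps -> exists delta : R, 0 < delta /\
    forall s : seq (R * set T),
      is_partition (map snd s) ->
      (forall i, (i < size s)%N -> forall x, (nth (0, set0) s i).2 x ->
          `|g x - (nth (0, set0) s i).1| <= delta) ->
      `|\sum_(p <- s) p.1 * mu p.2 - I| <= eps.

Definition ba_integral (T : Type) (mu : set T -> R) (g : T -> R) : R :=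
  xget 0 [set I | is_ba_integral mu g I].

Definition Phistar (M : Type) (d : M -> M -> R) (mu : set (Mtilde M) -> R)
  (f : M -> R) : R := ba_integral mu (deLeeuw d f).

(** F is an element of Lip_0(M)^* (only its values on Lip_0(M) matter) *)
Definition Lip0_dual (M : Type) (d : M -> M -> R) (x0 : M) (F : (M -> R) -> R) : Prop :=
  (forall (f g : M -> R) (a : R), Lip0 d x0 f -> Lip0 d x0 g ->
      F (fun x => f x + a * g x) = F f + a * F g) /\
  (exists C : R, forall f, Lip0 d x0 f -> `|F f| <= C * lipnorm d f).

Definition dual_norm (M : Type) (d : M -> M -> R) (x0 : M) (F : (M -> R) -> R) : R :=
  sup [set r | exists f, Lip0 d x0 f /\ lipnorm d f <= 1 /\ r = `|F f|].

End Defs.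

(* Main.v *)
Require Import Defs.
From mathcomp Require Import all_boot all_order all_algebra.
From mathcomp Require Import boolp classical_sets reals.
From mathcomp Require Import ring lra.
Set Implicit Arguments. Unset Strict Implicit. Unset Printing Implicit Defensive.
Import Order.TTheory GRing.Theory Num.Theory.
Local Open Scope classical_set_scope.
Local Open Scope ring_scope.
Section Fin.
Variables (R : realType) (T : Type).

Definition pdisj (s : seq (set T)) := forall i j, (i < j)%N -> (j < size s)%N ->
  nth set0 s i `&` nth set0 s j = set0.

Lemma pdisj_cons (a : set T) s : pdisj (a :: s) <->
  (forall j, (j < size s)%N -> a `&` nth set0 s j = set0) /\ pdisj s.
Proof.
split.
- move=> H; split.
  + by move=> j js; exact: (H 0%N j.+1).
  + by move=> i j ij js; exact: (H i.+1 j.+1).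
- move=> [H1 H2] [|i] [|j] //= ij js.
  + exact: H1.
  + exact: H2.
Qed.

Lemma disj_bigU (a : set T) (s : seq (set T)) : (forall j, (j < size s)%N -> a `&` nth set0 s j = set0) ->
  a `&` \big[setU/set0]_(A <- s) A = set0.
Proof.
elim: s => [|b s IH] H; first by rewrite big_nil setI0.
rewrite big_cons setIUr (H 0%N) // IH ?set0U // => j js.
exact: (H j.+1).
Qed.

Lemma FA (nu : set T -> R) : nu set0 = 0 ->
  (forall A B, A `&` B = set0 -> nu (A `|` B) = nu A + nu B) ->
  forall s, pdisj s -> nu (\big[setU/set0]_(A <- s) A) = \sum_(A <- s) nu A.
Proof.
move=> n0 nadd; elim => [|a s IH]; first by rewrite !big_nil.
move=> /pdisj_cons [H1 H2].
by rewrite !big_cons nadd ?IH //; exact: disj_bigU.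
Qed.

Lemma pdisj_map (f : set T -> set T) s : (forall A, f A `<=` A) -> pdisj s -> pdisj (map f s).
Proof.
move=> fA H i j ij js; rewrite size_map in js.
rewrite !(nth_map set0) //; last exact: ltn_trans ij js.
rewrite -subset0 => x [/fA xi /fA xj].
by rewrite -(H i j ij js).
Qed.

Lemma bigU_sub (I : Type) (s : seq I) (f : I -> set T) X :
  (forall i, f i `<=` X) -> \big[setU/set0]_(i <- s) f i `<=` X.
Proof.
move=> H; elim: s => [|a s IH]; first by rewrite big_nil.
by rewrite big_cons => x [/H|/IH].
Qed.

Lemma bigU_nth (s : seq (set T)) j : (j < size s)%N -> nth set0 s j `<=` \big[setU/set0]_(A <- s) A.
Proof.
elim: s j => [|a s IH] [|j] //= js; rewrite big_cons.
- by move=> x ax; left.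
- by move=> x /(IH j js) ?; right.
Qed.

Lemma setI_bigU (B : set T) (I : Type) (s : seq I) (f : I -> set T) :
  B `&` \big[setU/set0]_(i <- s) f i = \big[setU/set0]_(i <- s) (B `&` f i).
Proof.
elim: s => [|a s IH]; first by rewrite !big_nil setI0.
by rewrite !big_cons setIUr IH.
Qed.

Variable nu : set T -> R.
Hypothesis n0 : nu set0 = 0.
Hypothesis nadd : forall A B, A `&` B = set0 -> nu (A `|` B) = nu A + nu B.

Lemma sum_FA (s : seq (set T)) (q : set T -> set T) :
  pdisj s -> (forall A, q A `<=` A) ->
  \sum_(A <- s) nu (q A) = nu (\big[setU/set0]_(A <- s) q A).
Proof.
move=> ps qA; rewrite -(big_map q xpredT nu) -FA ?big_map //.
exact: pdisj_map.
Qed.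

Lemma refine (t : seq (set T)) B : pdisj t -> \big[setU/set0]_(A <- t) A = setT ->
  nu B = \sum_(A <- t) nu (B `&` A).
Proof.
move=> pt tT; rewrite sum_FA; [|done|by move=> A; exact: subIsetr].
by rewrite -setI_bigU tT setIT.
Qed.

Lemma triple_ident (s t u : seq (set T)) (q : set T -> set T -> set T -> set T) :
  pdisj s -> pdisj t -> pdisj u ->
  (forall A B D, q A B D `<=` A `&` B `&` D) ->
  exists X, \sum_(A <- s) \sum_(B <- t) \sum_(D <- u) nu (q A B D) = nu X.
Proof.
move=> ps pt pu qs.
have e1 A B : \sum_(D <- u) nu (q A B D) = nu (\big[setU/set0]_(D <- u) q A B D).
  by rewrite sum_FA // => D x /qs [].
under eq_bigr do under eq_bigr do rewrite e1.
have e2 A : \sum_(B <- t) nu (\big[setU/set0]_(D <- u) q A B D) =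
    nu (\big[setU/set0]_(B <- t) \big[setU/set0]_(D <- u) q A B D).
  rewrite (sum_FA (q := fun B => \big[setU/set0]_(D <- u) q A B D)) //.
  by move=> B; apply: bigU_sub => D x /qs [[]].
under eq_bigr do rewrite e2.
rewrite (sum_FA (q := fun A => \big[setU/set0]_(B <- t) \big[setU/set0]_(D <- u) q A B D)) //.
  by eexists.
by move=> A; apply: bigU_sub => B; apply: bigU_sub => D x /qs [[]].
Qed.

Variable C : R.
Hypothesis nbdd : forall A, `|nu A| <= C.

Lemma triple_bound (s t u : seq (set T)) :
  pdisj s -> pdisj t -> pdisj u ->
  \sum_(A <- s) \sum_(B <- t) \sum_(D <- u) `|nu (A `&` B `&` D)| <= 2 * C.
Proof.
move=> ps pt pu.
pose pos X := if (0 <= nu X) then X else set0.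
pose neg X := if (0 <= nu X) then set0 else X.
have e X : `|nu X| = nu (pos X) - nu (neg X).
  rewrite /pos /neg; case: ifP => h.
    by rewrite n0 subr0 ger0_norm.
  by rewrite n0 sub0r ltr0_norm // ltNge h.
under eq_bigr do under eq_bigr do under eq_bigr do rewrite e.
under eq_bigr do under eq_bigr do rewrite sumrB.
under eq_bigr do rewrite sumrB.
rewrite sumrB.
have [X1 ->] := @triple_ident s t u (fun A B D => pos (A `&` B `&` D)) ps pt pu
  ltac:(by move=> A B D; rewrite /pos; case: ifP => _; [exact: subset_refl|exact: sub0set]).
have [X2 ->] := @triple_ident s t u (fun A B D => neg (A `&` B `&` D)) ps pt pu
  ltac:(by move=> A B D; rewrite /neg; case: ifP => _; [exact: sub0set|exact: subset_refl]).
have := nbdd X1; have := nbdd X2.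
rewrite !ler_norml => /andP[? ?] /andP[? ?]; lra.
Qed.

End Fin.
Section Integ.
Variables (R : realType) (T : Type).

Definition bdd (g : T -> R) := exists B, forall x, `|g x| <= B.
Definition osc (g : T -> R) (d : R) (s : seq (R * set T)) :=
  forall i, (i < size s)%N -> forall x, (nth (0, set0) s i).2 x ->
    `|g x - (nth (0, set0) s i).1| <= d.
Definition adm g d s := is_partition (map snd s) /\ osc g d s.
Definition Ssum (mu : set T -> R) (s : seq (R * set T)) := \sum_(p <- s) p.1 * mu p.2.

Lemma osc_mem g d s : osc g d s -> forall p, p \in s -> forall x, p.2 x -> `|g x - p.1| <= d.
Proof. by move=> H p /(nthP (0, set0)) [i si <-]; exact: H. Qed.

Lemma osc_le g d d' s : osc g d s -> d <= d' -> osc g d' s.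
Proof. by move=> H dd i si x hx; apply: le_trans (H i si x hx) dd. Qed.

Lemma adm_D g d (dp : 0 < d) n : forall (D : set T) a,
  (forall x, D x -> a <= g x < a + n%:R * d) ->
  exists s, pdisj (map snd s) /\ \big[setU/set0]_(A <- map snd s) A = D /\ osc g d s.
Proof.
elim: n => [|n IH] D a H.
  exists [::]; split; first by move=> i j ij.
  split; last by move=> i.
  rewrite big_nil; apply/seteqP; split => x //= Dx.
  by have := H x Dx; rewrite mul0r addr0 => /andP[h1 h2]; lra.
pose D1 := D `&` [set x | g x < a + d].
pose D2 := D `&` [set x | a + d <= g x].
have [s' [ps' [us' os']]] : exists s, pdisj (map snd s) /\
    \big[setU/set0]_(A <- map snd s) A = D2 /\ osc g d s.
  apply: (IH D2 (a + d)) => x [Dx /= h]; apply/andP; split => //.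
  have /andP[_ h2] := H x Dx; move: h2; rewrite -natr1 mulrDl mul1r; lra.
exists ((a, D1) :: s'); split; [|split].
- rewrite /= pdisj_cons; split => // j js.
  have := bigU_nth js; rewrite us' => sub.
  rewrite -subset0 => x [[_ /= h1] /sub [_ /= h2]]; lra.
- rewrite /= big_cons us'; apply/seteqP; split => x.
    by case=> -[].
  move=> Dx /=; have [h|h] := ltP (g x) (a + d); [left|right]; by split.
- move=> [|i] /= si x.
    move=> [Dx /= h]; have /andP[h1 _] := H x Dx.
    rewrite ger0_norm; lra.
  exact: os'.
Qed.

Lemma adm_exists g d : bdd g -> 0 < d -> exists s, adm g d s.
Proof.
move=> [B HB] dp.
have [n hn] : exists n : nat, 2 * `|B| / d < n%:R.
  by exists (Num.bound (2 * `|B| / d)); apply: archi_boundP;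
     apply: divr_ge0 => //; [apply: mulr_ge0 | apply: ltW].
have hn' : 2 * `|B| < n%:R * d by rewrite -ltr_pdivrMr.
have [s [ps [us os]]] := @adm_D g d dp n setT (- `|B|) ltac:(
  move=> x _; have := HB x; have := ler_norm B;
  rewrite ler_norml => h1 /andP[h2 h3]; apply/andP; split; lra).
by exists s; split.
Qed.

Lemma int_unique mu g I J : bdd g -> is_ba_integral mu g I -> is_ba_integral mu g J -> I = J.
Proof.
move=> bg HI HJ; apply/eqP; rewrite -subr_eq0 -normr_le0.
suff key : forall e : R, 0 < e -> `|I - J| <= e.
  by apply/ler_addgt0Pr => e ep; rewrite add0r; exact: key.
move=> e ep.
have [d1 [d1p H1]] := HI (e / 2) ltac:(by apply: divr_gt0).
have [d2 [d2p H2]] := HJ (e / 2) ltac:(by apply: divr_gt0).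
have mp : 0 < Num.min d1 d2 by rewrite lt_min d1p d2p.
have [s [ps os]] := adm_exists bg mp.
have := H1 s ps (osc_le os (ltac:(by rewrite ge_min lexx) : Num.min d1 d2 <= d1)).
have := H2 s ps (osc_le os (ltac:(by rewrite ge_min lexx orbT) : Num.min d1 d2 <= d2)).
move: (\sum_(p <- s) p.1 * mu p.2) => S.
rewrite !ler_norml => /andP[? ?] /andP[? ?].
apply/andP; split; lra.
Qed.

Lemma ba_integralE mu g I : bdd g -> is_ba_integral mu g I -> ba_integral mu g = I.
Proof.
move=> bg HI; rewrite /ba_integral; apply: xget_unique => // J HJ.
exact: int_unique bg HJ HI.
Qed.

End Integ.
Section Eps.
Variable R : realType.
Lemma le_eps (x y c : R) : 0 <= c -> (forall d, 0 < d -> x <= y + d * c) -> x <= y.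
Proof.
move=> c0 H; suff key : forall e : R, 0 < e -> x <= y + e.
  by apply/ler_addgt0Pr => e ep; exact: key.
move=> e ep; have dp : 0 < e / (c + 1) by apply: divr_gt0 => //; lra.
apply: le_trans (H _ dp) _; rewrite lerD2l.
rewrite mulrAC ler_pdivrMr; last lra.
by rewrite mulrDr mulr1 lerDl ltW.
Qed.

Lemma eps_zero (x c : R) : 0 <= c -> (forall d, 0 < d -> `|x| <= d * c) -> x = 0.
Proof.
move=> c0 H; apply/eqP; rewrite -normr_le0; apply: (le_eps c0) => d dp.
by rewrite add0r; exact: H.
Qed.
End Eps.

Section BA.
Variables (R : realType) (T : Type) (nu : set T -> R).
Hypothesis n0 : nu set0 = 0.
Hypothesis nadd : forall A B, A `&` B = set0 -> nu (A `|` B) = nu A + nu B.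
Variable C : R.
Hypothesis nbdd : forall A, `|nu A| <= C.

Lemma C0 : 0 <= C.
Proof. by have := nbdd set0; rewrite n0 normr0. Qed.

Lemma ref1 (t : seq (R * set T)) B : is_partition (map snd t) ->
  nu B = \sum_(q <- t) nu (B `&` q.2).
Proof. by move=> [pt ut]; rewrite (refine n0 nadd B pt ut) big_map. Qed.

Lemma ref2 (t u : seq (R * set T)) B : is_partition (map snd t) -> is_partition (map snd u) ->
  nu B = \sum_(q <- t) \sum_(r <- u) nu (B `&` q.2 `&` r.2).
Proof.
move=> pt pu; rewrite (ref1 B pt); apply: eq_bigr => q _; exact: ref1.
Qed.

Lemma setI3 (X Y Z : set T) : Z `&` X `&` Y = X `&` Y `&` Z.
Proof. by apply/seteqP; split => x /= [[? ?] ?]. Qed.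
Lemma setI3' (X Y Z : set T) : Y `&` X `&` Z = X `&` Y `&` Z.
Proof. by apply/seteqP; split => x /= [[? ?] ?]. Qed.

Lemma term_bound (c D : R) (X : set T) : 0 <= D ->
  (forall x, X x -> `|c| <= D) -> `|c * nu X| <= D * `|nu X|.
Proof.
move=> D0 H; have [[x Xx]|nX] := pselect (exists x, X x).
  by rewrite normrM; apply: ler_wpM2r => //; exact: H x Xx.
have -> : X = set0 by apply/seteqP; split => x // Xx; apply: nX; exists x.
by rewrite n0 mulr0 normr0 mulr0.
Qed.

Lemma triple_cmp g h a d1 d2 d3 s t u :
  0 <= d1 -> 0 <= d2 -> 0 <= d3 ->
  adm (fun x => g x + a * h x) d1 s -> adm g d2 t -> adm h d3 u ->
  `|Ssum nu s - Ssum nu t - a * Ssum nu u| <= (d1 + d2 + `|a| * d3) * (2 * C).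
Proof.
move=> d10 d20 d30 [ps os] [pt ot] [pu ou].
have E1 : Ssum nu s = \sum_(p <- s) \sum_(q <- t) \sum_(r <- u) p.1 * nu (p.2 `&` q.2 `&` r.2).
  rewrite /Ssum; apply: eq_bigr => p _; rewrite (ref2 p.2 pt pu) mulr_sumr.
  by apply: eq_bigr => q _; rewrite mulr_sumr.
have E2 : Ssum nu t = \sum_(p <- s) \sum_(q <- t) \sum_(r <- u) q.1 * nu (p.2 `&` q.2 `&` r.2).
  rewrite exchange_big /Ssum; apply: eq_bigr => q _; rewrite (ref2 q.2 ps pu) mulr_sumr.
  apply: eq_bigr => p _; rewrite mulr_sumr; apply: eq_bigr => r _.
  by rewrite [q.2 `&` p.2]setIC.
have E3 : Ssum nu u = \sum_(p <- s) \sum_(q <- t) \sum_(r <- u) r.1 * nu (p.2 `&` q.2 `&` r.2).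
  under eq_bigr do rewrite exchange_big.
  rewrite exchange_big /Ssum; apply: eq_bigr => r _; rewrite (ref2 r.2 ps pt) mulr_sumr.
  apply: eq_bigr => p _; rewrite mulr_sumr; apply: eq_bigr => q _.
  by rewrite setI3.
have -> : Ssum nu s - Ssum nu t - a * Ssum nu u =
  \sum_(p <- s) \sum_(q <- t) \sum_(r <- u) ((p.1 - q.1 - a * r.1) * nu (p.2 `&` q.2 `&` r.2)).
  rewrite E1 E2 E3 mulr_sumr -!sumrB; apply: eq_bigr => p _.
  rewrite mulr_sumr -!sumrB; apply: eq_bigr => q _.
  rewrite mulr_sumr -!sumrB; apply: eq_bigr => r _; ring.
set D := d1 + d2 + `|a| * d3.
have D0 : 0 <= D by rewrite /D; apply: addr_ge0; [apply: addr_ge0|apply: mulr_ge0].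
apply: le_trans (ler_norm_sum _ _ _) _.
apply: le_trans (_ : \sum_(p <- s) \sum_(q <- t) \sum_(r <- u) D * `|nu (p.2 `&` q.2 `&` r.2)| <= _).
  rewrite big_seq_cond [X in _ <= X]big_seq_cond; apply: ler_sum => p /andP[ps' _].
  apply: le_trans (ler_norm_sum _ _ _) _.
  rewrite big_seq_cond [X in _ <= X]big_seq_cond; apply: ler_sum => q /andP[qt _].
  apply: le_trans (ler_norm_sum _ _ _) _.
  rewrite big_seq_cond [X in _ <= X]big_seq_cond; apply: ler_sum => r /andP[ru _].
  apply: term_bound => // x [[x1 x2] x3].
  have h1 := osc_mem os ps' x1; have h2 := osc_mem ot qt x2; have h3 := osc_mem ou ru x3.
  have -> : p.1 - q.1 - a * r.1 = - (g x + a * h x - p.1) + (g x - q.1) + a * (h x - r.1) by ring.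
  apply: le_trans (ler_normD _ _) _; rewrite normrM.
  apply: le_trans (lerD (ler_normD _ _) (lexx _)) _.
  rewrite normrN /D; apply: lerD; first exact: lerD.
  by apply: ler_wpM2l.
under eq_bigr do under eq_bigr do rewrite -mulr_sumr.
under eq_bigr do rewrite -mulr_sumr.
rewrite -mulr_sumr; apply: ler_wpM2l => //.
have := triple_bound n0 nadd nbdd ps.1 pt.1 pu.1.
rewrite big_map; under eq_bigr do rewrite big_map; by under eq_bigr do under eq_bigr do rewrite big_map.
Qed.

Lemma adm0 : adm (fun _ : T => 0 : R) 0 [:: (0, setT)].
Proof.
split; [split|].
- move=> i j ij; rewrite /= ltnS leqn0 => /eqP jz; by rewrite jz in ij.
- by rewrite /= big_cons big_nil setU0.
- by move=> [|i] //= _ x _; rewrite subrr normr0.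
Qed.

Lemma cmp2 g d1 d2 s t : 0 <= d1 -> 0 <= d2 -> adm g d1 s -> adm g d2 t ->
  `|Ssum nu s - Ssum nu t| <= (d1 + d2) * (2 * C).
Proof.
move=> d10 d20 hs ht.
have e : (fun x => g x + 0 * (fun _ : T => 0 : R) x) = g.
  by apply/funext => x; rewrite mul0r addr0.
have := @triple_cmp g (fun _ => 0) 0 d1 d2 0 s t [:: (0, setT)] d10 d20 (lexx 0)
  ltac:(by rewrite e) ht adm0.
by rewrite mul0r subr0 normr0 mul0r addr0.
Qed.

Lemma ba_int g : bdd g -> exists I, is_ba_integral nu g I /\
  (forall d s, 0 < d -> adm g d s -> `|Ssum nu s - I| <= d * (2 * C)).
Proof.
move=> bg; set W := 2 * C.
have W0 : 0 <= W by rewrite /W mulr_ge0 // C0.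
pose E := [set r | exists d s, 0 < d /\ adm g d s /\ r = Ssum nu s - d * W].
have [t0 ht0] := adm_exists bg ltr01.
have ubE : ubound E (Ssum nu t0 + W).
  move=> _ [d [s [dp [hs ->]]]].
  have := cmp2 (ltW dp) ler01 hs ht0; rewrite ler_norml mulrDl mul1r => /andP[_ h].
  rewrite -/W in h; lra.
have neE : E !=set0 by exists (Ssum nu t0 - 1 * W); exists 1, t0.
have hsE : has_ubound E by exists (Ssum nu t0 + W).
have key : forall d s, 0 < d -> adm g d s -> `|Ssum nu s - sup E| <= d * W.
  move=> d s dp hs; rewrite ler_norml; apply/andP; split.
  - have : sup E <= Ssum nu s + d * W.
      apply: ge_sup => // _ [d' [s' [dp' [hs' ->]]]].
      have := cmp2 (ltW dp') (ltW dp) hs' hs; rewrite ler_norml mulrDl => /andP[_ h].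
      rewrite -/W in h; lra.
    lra.
  - have : Ssum nu s - d * W <= sup E by apply: ub_le_sup => //; exists d, s.
    lra.
exists (sup E); split => //.
move=> e ep; have dp : 0 < e / (W + 1) by apply: divr_gt0 => //; lra.
exists (e / (W + 1)); split => // s hp ho.
apply: le_trans (key _ s dp (conj hp ho)) _.
rewrite mulrAC ler_pdivrMr; last lra.
by rewrite mulrDr mulr1 lerDl ltW.
Qed.

Lemma ba_intP g : bdd g -> is_ba_integral nu g (ba_integral nu g) /\
  (forall d s, 0 < d -> adm g d s -> `|Ssum nu s - ba_integral nu g| <= d * (2 * C)).
Proof. by move=> bg; have [I [HI HK]] := ba_int bg; rewrite (ba_integralE bg HI). Qed.

Lemma bdd_lin (g h : T -> R) a : bdd g -> bdd h -> bdd (fun x => g x + a * h x).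
Proof.
move=> [B1 H1] [B2 H2]; exists (B1 + `|a| * B2) => x.
apply: le_trans (ler_normD _ _) _; rewrite normrM; apply: lerD => //.
by apply: ler_wpM2l.
Qed.

Lemma ba_lin g h a : bdd g -> bdd h ->
  ba_integral nu (fun x => g x + a * h x) = ba_integral nu g + a * ba_integral nu h.
Proof.
move=> bg bh; have bgh := bdd_lin a bg bh.
have [_ K1] := ba_intP bgh; have [_ K2] := ba_intP bg; have [_ K3] := ba_intP bh.
apply/eqP; rewrite -subr_eq0; apply/eqP.
set W := 2 * C; have W0 : 0 <= W by rewrite /W mulr_ge0 // C0.
have A0 : 0 <= `|a| by [].
apply: (@eps_zero _ _ (W * (4 + 2 * `|a|))); first by apply: mulr_ge0 => //; lra.
move=> d dp.
have [s hs] := adm_exists bgh dp; have [t ht] := adm_exists bg dp.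
have [u hu] := adm_exists bh dp.
have h0 := triple_cmp (ltW dp) (ltW dp) (ltW dp) hs ht hu.
have h1 := K1 d s dp hs; have h2 := K2 d t dp ht; have h3 := K3 d u dp hu.
rewrite -/W in h0 h1 h2 h3.
move: h0 h1 h2 h3.
move: (ba_integral nu (fun x => g x + a * h x)) (ba_integral nu g) (ba_integral nu h) => I1 I2 I3.
move: (Ssum nu s) (Ssum nu t) (Ssum nu u) => S1 S2 S3 h0 h1 h2 h3.
have -> : I1 - (I2 + a * I3) = - (S1 - I1) + (S2 - I2) + a * (S3 - I3) + (S1 - S2 - a * S3) by ring.
have h3' : `|a * (S3 - I3)| <= `|a| * (d * W) by rewrite normrM; apply: ler_wpM2l.
have t1 := ler_normD (- (S1 - I1) + (S2 - I2) + a * (S3 - I3)) (S1 - S2 - a * S3).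
have t2 := ler_normD (- (S1 - I1) + (S2 - I2)) (a * (S3 - I3)).
have t3 := ler_normD (- (S1 - I1)) (S2 - I2).
rewrite normrN in t3.
have e1 : (d + d + `|a| * d) * W = 2 * (d * W) + `|a| * (d * W) by ring.
have e2 : d * (W * (4 + 2 * `|a|)) = 4 * (d * W) + 2 * (`|a| * (d * W)) by ring.
rewrite e2; rewrite e1 in h0.
move: (d * W) (`|a| * (d * W)) t1 t2 t3 h0 h1 h2 h3' => X Y; lra.
Qed.

Lemma pdisj1 (A : set T) : pdisj [:: A].
Proof. by move=> i j ij; rewrite /= ltnS leqn0 => /eqP jz; rewrite jz in ij. Qed.

Lemma part_sum_bound s : pdisj s -> \sum_(A <- s) `|nu A| <= 2 * C.
Proof.
move=> ps; have := triple_bound n0 nadd nbdd ps (pdisj1 (A:=setT)) (pdisj1 (A:=setT)).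
by under eq_bigr do rewrite big_seq1 big_seq1 !setIT.
Qed.

Lemma norm_ub s : is_partition s -> \sum_(A <- s) `|nu A| <= ba_norm nu.
Proof.
move=> hs; apply: ub_le_sup; last by exists s.
exists (2 * C) => _ [s' [[ps' _] ->]]; exact: part_sum_bound.
Qed.

Lemma partT : is_partition [:: @setT T].
Proof. by split; [exact: pdisj1|rewrite big_seq1]. Qed.

Lemma norm_ge0 : 0 <= ba_norm nu.
Proof. by apply: le_trans (norm_ub partT); rewrite big_seq1. Qed.

Lemma ba_bound g B : (forall x, `|g x| <= B) -> 0 <= B ->
  `|ba_integral nu g| <= B * ba_norm nu.
Proof.
move=> HB B0; have bg : bdd g by exists B.
have [_ K] := ba_intP bg.
set N := ba_norm nu; set W := 2 * C.
have W0 : 0 <= W by rewrite /W mulr_ge0 // C0.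
have N0 : 0 <= N := norm_ge0.
apply: (@le_eps _ _ _ (W + N)); first lra.
move=> d dp; have [s hs] := adm_exists bg dp.
have h1 := K d s dp hs.
have h2 : `|Ssum nu s| <= (B + d) * N.
  apply: le_trans (ler_norm_sum _ _ _) _.
  apply: le_trans (_ : \sum_(p <- s) (B + d) * `|nu p.2| <= _).
    rewrite big_seq_cond [X in _ <= X]big_seq_cond; apply: ler_sum => p /andP[ps _].
    apply: term_bound; first lra.
    move=> x px; have := osc_mem hs.2 ps px; have := HB x.
    have := ler_normB (g x) (g x - p.1).
    have -> : g x - (g x - p.1) = p.1 by ring.
    lra.
  rewrite -mulr_sumr; apply: ler_wpM2l; first lra.
  by have := norm_ub hs.1; rewrite big_map.
have -> : ba_integral nu g = Ssum nu s - (Ssum nu s - ba_integral nu g) by ring.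
have t1 := ler_normB (Ssum nu s) (Ssum nu s - ba_integral nu g).
have e1 : (B + d) * N = B * N + d * N by ring.
have e2 : d * (W + N) = d * W + d * N by ring.
rewrite e2; rewrite e1 in h2.
move: (d * W) (d * N) (B * N) t1 h1 h2 => X Y Z; lra.
Qed.

End BA.
Section Repr.
Variables (R : realType) (T : Type).
Hypothesis tT : exists t : T, True.

Definition psup (g : T -> R) := sup [set y | exists x, g x = y].

Lemma psup_le g b : (forall x, g x <= b) -> psup g <= b.
Proof.
move=> H; apply: ge_sup.
  by have [t _] := tT; exists (g t), t.
by move=> _ [x <-].
Qed.

Lemma psup_ge g x : bdd g -> g x <= psup g.
Proof.
move=> [B HB]; apply: ub_le_sup; last by exists x.
exists B => _ [y <-]; exact: le_trans (ler_norm _) (HB y).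
Qed.

Definition indic (A : set T) : T -> R := fun x => if `[< A x >] then 1 else 0.

Lemma bdd_indic A : bdd (indic A).
Proof. by exists 1 => x; rewrite /indic; case: ifP; rewrite ?normr1 ?normr0. Qed.

Variables (K : R) (L : (T -> R) -> R).
Hypothesis K0 : 0 <= K.
Hypothesis Llin : forall g h a, bdd g -> bdd h ->
  L (fun x => g x + a * h x) = L g + a * L h.
Hypothesis Ldom : forall g, bdd g -> L g <= K * psup g.

Lemma bdd0 : bdd (fun _ : T => 0 : R).
Proof. by exists 0 => x; rewrite normr0. Qed.

Lemma L0 : L (fun _ => 0) = 0.
Proof.
have h : L (fun _ => 0) = L (fun _ => 0) + 1 * L (fun _ => 0).
  rewrite -Llin; [|exact: bdd0|exact: bdd0].
  by congr L; apply/funext => x; rewrite mulr0 addr0.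
lra.
Qed.

Lemma LN g : bdd g -> L (fun x => - g x) = - L g.
Proof.
move=> bg; have h : L (fun x => - g x) = L (fun _ => 0) + -1 * L g.
  rewrite -Llin; [|exact: bdd0|exact: bg].
  by congr L; apply/funext => x; rewrite add0r mulN1r.
by rewrite h L0 add0r mulN1r.
Qed.

Lemma Lbound g B : (forall x, `|g x| <= B) -> `|L g| <= K * B.
Proof.
move=> HB; have bg : bdd g by exists B.
have bg' : bdd (fun x => - g x) by exists B => x; rewrite normrN.
rewrite ler_norml; apply/andP; split.
  rewrite lerNl -LN //; apply: le_trans (Ldom bg') _; apply: ler_wpM2l => //.
  by apply: psup_le => x; have := HB x; rewrite ler_norml => /andP[h _]; lra.
apply: le_trans (Ldom bg) _; apply: ler_wpM2l => //.
by apply: psup_le => x; have := HB x; rewrite ler_norml => /andP[_ h].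
Qed.

Definition muL (A : set T) := L (indic A).

Lemma indic0 : indic set0 = fun _ => 0.
Proof. by apply/funext => x; rewrite /indic asboolF. Qed.

Lemma muL0 : muL set0 = 0.
Proof. by rewrite /muL indic0 L0. Qed.

Lemma muL_add A B : A `&` B = set0 -> muL (A `|` B) = muL A + muL B.
Proof.
move=> AB; rewrite /muL -[L (indic B)]mul1r -Llin; [|exact: bdd_indic|exact: bdd_indic].
congr L.
apply/funext => x; rewrite /indic mul1r.
case: (asboolP (A x)) => ha; case: (asboolP (B x)) => hb;
  case: (asboolP ((A `|` B) x)) => hab.
all: try by (exfalso; apply: hab; (left + right)).
all: try by [rewrite addr0|rewrite add0r].
- have : (A `&` B) x by []. by rewrite AB.
- by case: hab.
Qed.

Lemma muL_ba : is_ba muL.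
Proof.
split; [exact: muL0|split; [exact: muL_add|]].
exists (K * 1) => A; apply: Lbound => x.
by rewrite /indic; case: ifP; rewrite ?normr1 ?normr0.
Qed.

Lemma muL_pos : positive_measure muL.
Proof.
move=> A; rewrite /muL; have bi := bdd_indic A.
have bi' : bdd (fun x => - indic A x) by have [B HB] := bi; exists B => x; rewrite normrN.
have := Ldom bi'; rewrite LN //.
have : psup (fun x => - indic A x) <= 0.
  by apply: psup_le => x; rewrite /indic; case: ifP; rewrite ?oppr0 // lerN10.
move=> h1 h2; have : K * psup (fun x => - indic A x) <= 0 by rewrite mulr_ge0_le0.
lra.
Qed.

Lemma Lsum (s : seq (R * set T)) :
  bdd (fun x => \sum_(p <- s) p.1 * indic p.2 x) /\
  L (fun x => \sum_(p <- s) p.1 * indic p.2 x) = \sum_(p <- s) p.1 * muL p.2.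
Proof.
elim: s => [|p s [IH1 IH2]].
  have -> : (fun x => \sum_(p <- [::]) p.1 * indic p.2 x) = (fun _ => 0).
    by apply/funext => x; rewrite big_nil.
  by rewrite big_nil L0; split => //; exact: bdd0.
have -> : (fun x => \sum_(q <- p :: s) q.1 * indic q.2 x) =
  (fun x => (fun y => \sum_(q <- s) q.1 * indic q.2 y) x + p.1 * indic p.2 x).
  by apply/funext => x; rewrite big_cons addrC.
split; first exact: bdd_lin IH1 (bdd_indic _).
rewrite Llin; [|exact: IH1|exact: bdd_indic].
by rewrite IH2 big_cons addrC.
Qed.

Lemma indic_sum (s : seq (R * set T)) x : is_partition (map snd s) ->
  \sum_(p <- s) indic p.2 x = 1.
Proof.
move=> [ps us].
have := @FA R T (fun A => indic A x) ltac:(by rewrite /indic asboolF).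
move=> /(_ _ (map snd s) ps); rewrite us big_map => <-.
  by rewrite /indic asboolT.
move=> A B AB /=; rewrite /indic.
case: (asboolP (A x)) => ha; case: (asboolP (B x)) => hb;
  case: (asboolP ((A `|` B) x)) => hab.
all: try by (exfalso; apply: hab; (left + right)).
all: try by [rewrite addr0|rewrite add0r].
- have : (A `&` B) x by []. by rewrite AB.
- by case: hab.
Qed.

Lemma muL_int g : bdd g -> is_ba_integral muL g (L g).
Proof.
move=> bg e ep; exists (e / (K + 1)); split.
  by apply: divr_gt0 => //; exact: ltr_wpDl K0 ltr01.
move=> s hp ho.
have [b1 b2] := Lsum s; rewrite -b2.
set phi := (fun x => \sum_(p <- s) p.1 * indic p.2 x).
have -> : L phi - L g = L (fun x => phi x + -1 * g x) by rewrite Llin // mulN1r.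
apply: le_trans (_ : K * (e / (K + 1)) <= _); last first.
  rewrite mulrA ler_pdivrMr; last exact: ltr_wpDl K0 ltr01.
  by rewrite mulrDr mulr1 mulrC lerDl ltW.
apply: Lbound => x.
have -> : phi x + -1 * g x = \sum_(p <- s) (p.1 - g x) * indic p.2 x.
  have -> : \sum_(p <- s) (p.1 - g x) * indic p.2 x =
      phi x - g x * \sum_(p <- s) indic p.2 x.
    by rewrite /phi mulr_sumr -sumrB; apply: eq_bigr => p _; ring.
  by rewrite indic_sum // mulr1 mulN1r.
apply: le_trans (ler_norm_sum _ _ _) _.
apply: le_trans (_ : \sum_(p <- s) e / (K + 1) * indic p.2 x <= _); last first.
  by rewrite -mulr_sumr indic_sum // mulr1.
rewrite big_seq_cond [X in _ <= X]big_seq_cond; apply: ler_sum => p /andP[ps _].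
rewrite normrM /indic; case: (asboolP (p.2 x)) => px; last by rewrite normr0 !mulr0.
rewrite normr1 !mulr1 distrC; exact: (osc_mem ho ps px).
Qed.

Lemma muL_integral g : bdd g -> ba_integral muL g = L g.
Proof. by move=> bg; apply: ba_integralE bg (muL_int bg). Qed.

Lemma muL_norm : ba_norm muL = L (fun _ => 1).
Proof.
have -> : (fun _ : T => 1 : R) = indic setT by apply/funext => x; rewrite /indic asboolT.
rewrite /ba_norm -/(muL setT).
suff -> : [set r | exists s : seq (set T), is_partition s /\ r = \sum_(A <- s) `|muL A|]
  = [set muL setT] by rewrite sup1.
apply/seteqP; split => r /=.
  move=> [s [[ps us] ->]].
  under eq_bigr do rewrite ger0_norm ?muL_pos //.
  by rewrite -(FA muL0 muL_add ps) us.
move=> ->; exists [:: setT]; split; first exact: partT.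
by rewrite big_seq1 ger0_norm // muL_pos.
Qed.

End Repr.
Section HBsec.
Variables (R : realType) (T : Type).
Hypothesis tT : exists t : T, True.
Variable K : R.
Hypothesis K0 : 0 <= K.

Let p (g : T -> R) := K * psup g.

Lemma p_sub g h : bdd g -> bdd h -> p (fun x => g x + h x) <= p g + p h.
Proof.
move=> bg bh; rewrite /p -mulrDr; apply: ler_wpM2l => //.
apply: (psup_le tT) => x; apply: lerD; exact: psup_ge.
Qed.

Lemma p_hom g t : bdd g -> 0 < t -> p (fun x => t * g x) = t * p g.
Proof.
move=> bg tp; rewrite /p mulrCA; congr (K * _).
have btg : bdd (fun x => t * g x).
  by have := bdd_lin t (@bdd0 R T) bg; congr bdd; apply/funext => x; rewrite add0r.
apply/eqP; rewrite eq_le; apply/andP; split.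
  by apply: (psup_le tT) => x; apply: ler_wpM2l; [exact: ltW|exact: psup_ge].
rewrite -ler_pdivlMl //; apply: (psup_le tT) => x.
rewrite ler_pdivlMl //; exact: (psup_ge x btg).
Qed.

Definition HBprop (G0 G : set ((T -> R) * R)) :=
  [/\ (forall g r, G (g, r) -> bdd g),
      (forall g r r', G (g, r) -> G (g, r') -> r = r'),
      (forall g r h s a, G (g, r) -> G (h, s) -> G ((fun x => g x + a * h x), r + a * s)),
      (forall g r, G (g, r) -> r <= p g) &
      G0 `<=` G].

Lemma Gmem (G : set ((T -> R) * R)) f f' r r' : G (f, r) -> f = f' -> r = r' -> G (f', r').
Proof. by move=> H <- <-. Qed.

Lemma chain_ok (G0 : set ((T -> R) * R)) (F : set (set ((T -> R) * R))) :
  HBprop G0 G0 -> F `<=` (fun X => HBprop G0 (X `|` G0)) -> total_on F subset ->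
  HBprop G0 ((\bigcup_(X in F) X) `|` G0).
Proof.
move=> H0 FP tot.
set U := (\bigcup_(X in F) X) `|` G0.
have pairP : forall e1 e2, U e1 -> U e2 -> exists Y, HBprop G0 (Y `|` G0) /\
    (Y `|` G0) e1 /\ (Y `|` G0) e2 /\ (Y `|` G0) `<=` U.
  have sub X : F X -> (X `|` G0) `<=` U.
    by move=> FX e [Xe|G0e]; [left; exists X|right].
  move=> e1 e2 [[X1 FX1 e1X]|e1G] [[X2 FX2 e2X]|e2G].
  - have [s12|s21] := tot _ _ FX1 FX2.
      exists X2; split; first exact: FP.
      by split; [left; exact: s12|split; [left|exact: sub]].
    exists X1; split; first exact: FP.
    by split; [left|split; [left; exact: s21|exact: sub]].
  - exists X1; split; first exact: FP.
    by split; [left|split; [right|exact: sub]].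
  - exists X2; split; first exact: FP.
    by split; [right|split; [left|exact: sub]].
  - exists set0; rewrite set0U; split => //.
    by split => //; split => // e ?; right.
have singP : forall e, U e -> exists Y, HBprop G0 (Y `|` G0) /\
    (Y `|` G0) e /\ (Y `|` G0) `<=` U.
  by move=> e Ue; have [Y [HY [e1 [_ sY]]]] := pairP e e Ue Ue; exists Y.
split.
- move=> g r /singP [Y [[b _ _ _ _] [e _]]]; exact: b e.
- move=> g r r' U1 U2; have [Y [[_ f _ _ _] [e1 [e2 _]]]] := pairP _ _ U1 U2.
  exact: f e1 e2.
- move=> g r h s a U1 U2; have [Y [[_ _ l _ _] [e1 [e2 sY]]]] := pairP _ _ U1 U2.
  exact/sY/l.
- move=> g r /singP [Y [[_ _ _ d _] [e _]]]; exact: d e.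
- by move=> e ?; right.
Qed.

Lemma bdd_add (g h : T -> R) : bdd g -> bdd h -> bdd (fun x => g x + h x).
Proof.
move=> bg bh; have := bdd_lin 1 bg bh; congr bdd; apply/funext => x; by rewrite mul1r.
Qed.

Lemma bdd_sub (g h : T -> R) : bdd g -> bdd h -> bdd (fun x => g x - h x).
Proof.
move=> bg bh; have := bdd_lin (-1) bg bh; congr bdd; apply/funext => x; by rewrite mulN1r.
Qed.

Lemma bdd_scale (h : T -> R) a : bdd h -> bdd (fun x => a * h x).
Proof.
move=> bh; have := bdd_lin a (@bdd0 R T) bh; congr bdd; apply/funext => x; by rewrite add0r.
Qed.

Lemma HB_ext (G0 : set ((T -> R) * R)) : HBprop G0 G0 -> (exists e, G0 e) ->
  exists L : (T -> R) -> R,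
    (forall g h a, bdd g -> bdd h -> L (fun x => g x + a * h x) = L g + a * L h) /\
    (forall g, bdd g -> L g <= K * psup g) /\
    (forall g r, G0 (g, r) -> L g = r).
Proof.
move=> H0 [e0 G0e0].
have [A [PA Amax]] := @Zorn_bigcup _ (fun X => HBprop G0 (X `|` G0))
  (fun F FP tot => chain_ok H0 FP tot).
set G := A `|` G0.
have PA' := PA; case: PA' => Gb Gf Gl Gd Gext.
have G00 : G (fun _ => 0, 0).
  case: e0 G0e0 => g r G0e; have Ge := Gext _ G0e.
  apply: (Gmem (Gl _ _ _ _ (-1) Ge Ge)); last by rewrite mulN1r subrr.
  by apply/funext => x; rewrite mulN1r subrr.
have Gsc : forall h r a, G (h, r) -> G (fun x => a * h x, a * r).
  move=> h r a H; apply: (Gmem (Gl _ _ _ _ a G00 H)); last by rewrite add0r.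
  by apply/funext => x; rewrite add0r.
have total : forall g0, bdd g0 -> exists r, G (g0, r).
  move=> g0 bg0; have [//|nG] := pselect (exists r, G (g0, r)).
  exfalso.
  pose Lset := [set y | exists h r, G (h, r) /\ y = r - p (fun x => h x - g0 x)].
  have ubnd : forall h r h' r', G (h, r) -> G (h', r') ->
      r - p (fun x => h x - g0 x) <= p (fun x => h' x + g0 x) - r'.
    move=> h r h' r' H H'; have := Gd _ _ (Gl _ _ _ _ 1 H H').
    have bh := Gb _ _ H; have bh' := Gb _ _ H'.
    have ps := p_sub (bdd_sub bh bg0) (bdd_add bh' bg0).
    have -> : (fun x => h x + 1 * h' x) = (fun x => (h x - g0 x) + (h' x + g0 x)).
      by apply/funext => x; ring.
    move: ps; move: (p (fun x => h x - g0 x + (h' x + g0 x))) => P ps.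
    lra.
  set c := sup Lset.
  have Lne : Lset !=set0.
    by exists (0 - p (fun x => 0 - g0 x)), (fun _ => 0), 0.
  have Lub : has_ubound Lset.
    exists (p (fun x => 0 + g0 x) - 0) => _ [h [r [H ->]]]; exact: ubnd H G00.
  have c_lo : forall h r, G (h, r) -> r - p (fun x => h x - g0 x) <= c.
    by move=> h r H; apply: ub_le_sup => //; exists h, r.
  have c_hi : forall h r, G (h, r) -> c <= p (fun x => h x + g0 x) - r.
    by move=> h r H; apply: ge_sup => // _ [h' [r' [H' ->]]]; exact: ubnd.
  pose G' := [set e | exists h r t, G (h, r) /\ e = ((fun x => h x + t * g0 x), r + t * c)].
  have GG' : G `<=` G'.
    move=> [h r] H; exists h, r, 0; split => //.
    by congr pair; [apply/funext => x|]; rewrite mul0r addr0.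
  have HB' : HBprop G0 G'.
    split.
    - by move=> g r [h [r0 [t [H e]]]]; case: e => -> _; exact: bdd_lin (Gb _ _ H) bg0.
    - move=> g r1 r2 [h1 [s1 [t1 [H1 e1]]]] [h2 [s2 [t2 [H2 e2]]]].
      case: e1 => eg1 er1; case: e2 => eg2 er2.
      have pt : forall x, h1 x + t1 * g0 x = h2 x + t2 * g0 x.
        by move=> x; have := congr1 (fun f => f x) (etrans (esym eg1) eg2).
      have [tt|tne] := eqVneq t1 t2.
        subst t2; have hh : h1 = h2 by apply/funext => x; have := pt x; lra.
        subst h2; by rewrite er1 er2 (Gf _ _ _ H1 H2).
      exfalso; apply: nG; exists ((s1 - s2) / (t2 - t1)).
      have Hd := Gsc _ _ ((t2 - t1)^-1) (Gl _ _ _ _ (-1) H1 H2).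
      apply: (Gmem Hd); last by rewrite mulN1r mulrC.
      have tne' : t2 - t1 != 0 by rewrite subr_eq0 eq_sym.
      apply/funext => x.
      rewrite (_ : h1 x + -1 * h2 x = (t2 - t1) * g0 x); last by have := pt x; lra.
      by rewrite mulrA mulVf ?mul1r.
    - move=> g r h s a [h1 [s1 [t1 [H1 e1]]]] [h2 [s2 [t2 [H2 e2]]]].
      case: e1 => -> ->; case: e2 => -> ->.
      exists (fun x => h1 x + a * h2 x), (s1 + a * s2), (t1 + a * t2); split; first exact: Gl.
      by congr pair; [apply/funext => x|]; ring.
    - move=> g v [h [r [t [H e]]]]; case: e => -> ->.
      have bh := Gb _ _ H.
      case: (ltgtP t 0) => [tn|tp|->].
      + have sp : 0 < - t by rewrite oppr_gt0.
        have Hs := Gsc _ _ ((- t)^-1) H.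
        have hlo := c_lo _ _ Hs.
        have e : p (fun x => h x + t * g0 x) = (- t) * p (fun x => (- t)^-1 * h x - g0 x).
          rewrite -p_hom //; last exact: bdd_sub (bdd_scale _ bh) bg0.
          have tnz : t != 0 by rewrite lt_eqF.
          by congr p; apply/funext => x; field; rewrite ?oppr_eq0.
        rewrite e.
        have := ler_wpM2l (ltW sp) hlo.
        move: (p (fun x => (- t)^-1 * h x - g0 x)) => P.
        have tnz : t != 0 by rewrite lt_eqF.
        have -> : - t * ((- t)^-1 * r - P) = r + t * P by field; rewrite ?oppr_eq0.
        lra.
      + have Hs := Gsc _ _ (t^-1) H.
        have hhi := c_hi _ _ Hs.
        have e : p (fun x => h x + t * g0 x) = t * p (fun x => t^-1 * h x + g0 x).
          rewrite -p_hom //; last exact: bdd_add (bdd_scale _ bh) bg0.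
          have tnz : t != 0 by rewrite gt_eqF.
          by congr p; apply/funext => x; field.
        rewrite e.
        have := ler_wpM2l (ltW tp) hhi.
        move: (p (fun x => t^-1 * h x + g0 x)) => P.
        have tnz : t != 0 by rewrite gt_eqF.
        have -> : t * (P - t^-1 * r) = t * P - r by field.
        lra.
      + rewrite mul0r addr0.
        have -> : (fun x => h x + 0 * g0 x) = h by apply/funext => x; rewrite mul0r addr0.
        exact: Gd H.
    - by move=> e /Gext /GG'.
  apply: (Amax G'); last first.
    rewrite (_ : G' `|` G0 = G') //; apply/seteqP; split => e; last by left.
    by case => // /Gext /GG'.
  split; first by move=> e Ae; apply: GG'; left.
  move=> sub; apply: nG; exists c.
  have : G' (g0, c).
    exists (fun _ => 0), 0, 1; split => //.
    by congr pair; [apply/funext => x|]; rewrite add0r mul1r.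
  by move/sub => Ag; left.
pose L g := xget 0 [set r | G (g, r)].
have GL : forall g, bdd g -> G (g, L g) by move=> g bg; exact: (xgetPex 0 (total g bg)).
exists L; split; [|split].
- move=> g h a bg bh; apply: (Gf _ _ _ (GL _ (bdd_lin a bg bh))).
  exact: Gl (GL g bg) (GL h bh).
- by move=> g bg; exact: Gd (GL g bg).
- move=> g r G0g; have Gg := Gext _ G0g; exact: Gf (GL g (Gb _ _ Gg)) Gg.
Qed.

End HBsec.
Section Main.
Variables (R : realType) (M : Type) (d : M -> M -> R) (x0 : M).
Hypothesis hm : is_metric d.

Local Notation T := (Mtilde M).
Local Notation Phi := (deLeeuw d).

Lemma d_pos x y : x <> y -> 0 < d x y.
Proof.
move=> xy; case: hm => [h0 [hs ht]].
have h1 := ht x y x; rewrite (proj2 (h0 x x) erefl) (hs y x) in h1.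
rewrite lt0r; apply/andP; split; last lra.
by apply/eqP => /h0.
Qed.

Definition swapT (t : T) : T :=
  exist (fun p : M * M => p.1 <> p.2) ((sval t).2, (sval t).1)
    (fun e => svalP t (esym e)).

Lemma Phi_swap f t : Phi f (swapT t) = - Phi f t.
Proof.
rewrite /deLeeuw /=; case: hm => [_ [hs _]]; rewrite hs.
by rewrite -mulNr opprB.
Qed.

Lemma Phi_bdd f : Lip0 d x0 f -> bdd (Phi f).
Proof.
move=> [[L HL] _]; exists L => t; rewrite /deLeeuw.
have dp := d_pos (svalP t).
rewrite normrM normfV (gtr0_norm dp) ler_pdivrMr //; exact: HL.
Qed.

Lemma Phi_lin f g a : Phi (fun x => f x + a * g x) = fun t => Phi f t + a * Phi g t.
Proof. by apply/funext => t; rewrite /deLeeuw; ring. Qed.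

Lemma Phi0 : Phi (fun _ => 0) = fun _ => 0.
Proof. by apply/funext => t; rewrite /deLeeuw subrr mul0r. Qed.

Lemma Lip0_0 : Lip0 d x0 (fun _ => 0).
Proof.
split => //; exists 0 => x y; rewrite subrr normr0 mul0r //.
Qed.

Lemma Lip0_lin f g a : Lip0 d x0 f -> Lip0 d x0 g -> Lip0 d x0 (fun x => f x + a * g x).
Proof.
move=> [[L1 H1] f0] [[L2 H2] g0]; split; last by rewrite f0 g0 mulr0 addr0.
exists (L1 + `|a| * L2) => x y.
have -> : f x + a * g x - (f y + a * g y) = (f x - f y) + a * (g x - g y) by ring.
apply: le_trans (ler_normD _ _) _; rewrite normrM mulrDl -mulrA.
by apply: lerD => //; apply: ler_wpM2l.
Qed.

Lemma Phi_inj f f' c c' : (exists t : T, True) -> Lip0 d x0 f -> Lip0 d x0 f' ->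
  (fun t => Phi f t + c) = (fun t => Phi f' t + c') -> f = f' /\ c = c'.
Proof.
move=> [t _] [_ f0] [_ f'0] e.
have pt : forall t, Phi f t + c = Phi f' t + c' by move=> s; exact: (congr1 (fun h => h s) e).
have cc : c = c'.
  have := pt t; have := pt (swapT t); rewrite !Phi_swap; lra.
subst c'; split => //.
apply/funext => x; have [->|xx0] := pselect (x = x0); first by rewrite f0 f'0.
have := pt (exist (fun p : M * M => p.1 <> p.2) (x, x0) xx0).
rewrite /deLeeuw /= f0 f'0 !subr0 => h.
have dp := d_pos xx0.
have : f x / d x x0 = f' x / d x x0 by lra.
by move/(congr1 (fun z => z * d x x0)); rewrite !mulfVK // gt_eqF.
Qed.

Section Gen.
Hypothesis tT : exists t : T, True.
Variables (K : R) (V : (M -> R) -> R).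
Hypothesis K0 : 0 <= K.
Hypothesis Vlin : forall f g a, Lip0 d x0 f -> Lip0 d x0 g ->
  V (fun x => f x + a * g x) = V f + a * V g.
Hypothesis Vdom : forall f b, Lip0 d x0 f -> (forall t, `|Phi f t| <= b) -> V f <= K * b.

Lemma V0 : V (fun _ => 0) = 0.
Proof.
have h := Vlin 1 Lip0_0 Lip0_0.
have e : (fun x : M => (fun _ : M => 0 : R) x + 1 * (fun _ => 0) x) = (fun _ => 0).
  by apply/funext => x; rewrite mulr0 addr0.
rewrite e in h; lra.
Qed.

Definition G0 : set ((T -> R) * R) :=
  [set e | exists f c, Lip0 d x0 f /\ e = ((fun t => Phi f t + c), V f + c * K)].

Lemma bdd_cst (c : R) : bdd (fun _ : T => c).
Proof. by exists `|c|. Qed.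

Lemma G0_HB : HBprop K G0 G0.
Proof.
split.
- move=> g r [f [c [Lf e]]]; case: e => -> _.
  exact: bdd_add (Phi_bdd Lf) (bdd_cst c).
- move=> g r r' [f [c [Lf e]]] [f' [c' [Lf' e']]].
  case: e => eg ->; case: e' => eg' ->.
  have [-> ->] := Phi_inj tT Lf Lf' (etrans (esym eg) eg').
  by [].
- move=> g r h s a [f [c [Lf e]]] [f' [c' [Lf' e']]].
  case: e => -> ->; case: e' => -> ->.
  exists (fun x => f x + a * f' x), (c + a * c'); split; first exact: Lip0_lin.
  rewrite Phi_lin Vlin //; congr pair; [apply/funext => t|]; ring.
- move=> g r [f [c [Lf e]]]; case: e => -> ->.
  have bg : bdd (fun t => Phi f t + c) := bdd_add (Phi_bdd Lf) (bdd_cst c).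
  set s := psup (fun t => Phi f t + c).
  have h1 : forall t, Phi f t + c <= s by move=> t; exact: psup_ge t bg.
  have h2 : forall t, `|Phi f t| <= s - c.
    move=> t; have := h1 t; have := h1 (swapT t); rewrite Phi_swap.
    rewrite ler_norml => ? ?; apply/andP; split; lra.
  have := Vdom Lf h2; rewrite mulrBr; lra.
- by [].
Qed.

Lemma gen_repr : exists mu : set T -> R,
  is_ba mu /\ positive_measure mu /\
  (forall f, Lip0 d x0 f -> Phistar d mu f = V f) /\ ba_norm mu = K.
Proof.
have ne : exists e, G0 e.
  by exists ((fun t => Phi (fun _ => 0) t + 0), V (fun _ => 0) + 0 * K), (fun _ => 0), 0;
     split => //; exact: Lip0_0.
have [L [Llin [Ldom Lext]]] := HB_ext tT K0 G0_HB ne.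
exists (muL L); split; [|split; [|split]].
- by have := muL_ba tT K0 Llin Ldom.
- by have := muL_pos tT K0 Llin Ldom.
- move=> f Lf; rewrite /Phistar (muL_integral tT K0 Llin Ldom (Phi_bdd Lf)).
  have := Lext (fun t => Phi f t + 0) (V f + 0 * K) ltac:(by exists f, 0).
  rewrite mul0r addr0 => <-; congr L; apply/funext => t; by rewrite addr0.
- rewrite (muL_norm tT K0 Llin Ldom).
  have := Lext (fun t => Phi (fun _ => 0) t + 1) (V (fun _ => 0) + 1 * K)
    ltac:(by exists (fun _ => 0), 1; split => //; exact: Lip0_0).
  rewrite V0 mul1r add0r => <-; congr L; apply/funext => t; by rewrite Phi0 add0r.
Qed.

End Gen.
End Main.
Section Dual.
Variables (R : realType) (M : Type) (d : M -> M -> R) (x0 : M).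
Hypothesis hm : is_metric d.
Hypothesis txy : exists x y : M, x <> y.
Variable F : (M -> R) -> R.
Hypothesis Flin : forall (f g : M -> R) (a : R), Lip0 d x0 f -> Lip0 d x0 g ->
      F (fun x => f x + a * g x) = F f + a * F g.
Variable C : R.
Hypothesis FC : forall f, Lip0 d x0 f -> `|F f| <= C * lipnorm d f.

Lemma lip_elem f x y : Lip0 d x0 f -> x <> y -> `|f x - f y| / d x y <= lipnorm d f.
Proof.
move=> [[L HL] _] xy; apply: ub_le_sup; last by exists x, y.
exists L => _ [a [b [ab ->]]].
by rewrite ler_pdivrMr ?(d_pos hm ab) //; exact: HL.
Qed.

Lemma lipnorm_le f b : (forall x y, x <> y -> `|f x - f y| / d x y <= b) -> lipnorm d f <= b.
Proof.
move=> H; apply: ge_sup.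
  by have [x [y xy]] := txy; exists (`|f x - f y| / d x y), x, y.
by move=> _ [a [c [ac ->]]]; exact: H.
Qed.

Lemma lipnorm_ge0 f : Lip0 d x0 f -> 0 <= lipnorm d f.
Proof.
move=> Lf; have [x [y xy]] := txy; apply: le_trans (lip_elem Lf xy).
by apply: divr_ge0 => //; exact: ltW (d_pos hm xy).
Qed.

Lemma F0 : F (fun _ => 0) = 0.
Proof.
have h := Flin 1 (Lip0_0 d x0) (Lip0_0 d x0).
have e : (fun x : M => (fun _ : M => 0 : R) x + 1 * (fun _ => 0) x) = (fun _ => 0).
  by apply/funext => x; rewrite mulr0 addr0.
rewrite e in h; lra.
Qed.

Definition dset := [set r | exists f, Lip0 d x0 f /\ lipnorm d f <= 1 /\ r = `|F f|].

Lemma dset_ub : has_ubound dset.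
Proof.
exists `|C| => _ [f [Lf [l1 ->]]].
apply: le_trans (FC Lf) _.
have l0 := lipnorm_ge0 Lf.
apply: le_trans (_ : `|C| * lipnorm d f <= _).
  by apply: ler_wpM2r => //; exact: ler_norm.
by rewrite -{2}(mulr1 `|C|); apply: ler_wpM2l.
Qed.

Lemma lipnorm0 : lipnorm d (fun _ : M => 0 : R) <= 1.
Proof. by apply: lipnorm_le => x y _; rewrite subrr normr0 mul0r. Qed.

Lemma dual_ge0 : 0 <= dual_norm d x0 F.
Proof.
apply: ub_le_sup; first exact: dset_ub.
exists (fun _ => 0); split; first exact: Lip0_0.
by split; [exact: lipnorm0|rewrite F0 normr0].
Qed.

Lemma F_le f : Lip0 d x0 f -> `|F f| <= dual_norm d x0 F * lipnorm d f.
Proof.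
move=> Lf; set l := lipnorm d f.
have l0 : 0 <= l := lipnorm_ge0 Lf.
have [lz|lp] := eqVneq l 0.
  by have := FC Lf; rewrite -/l lz !mulr0.
have lpos : 0 < l by rewrite lt0r lp.
have lip : 0 < l^-1 by rewrite invr_gt0.
pose g := fun x => (fun _ : M => 0 : R) x + l^-1 * f x.
have Lg : Lip0 d x0 g by exact: Lip0_lin (Lip0_0 d x0) Lf.
have Fg : F g = l^-1 * F f by rewrite /g Flin ?F0 ?add0r //; exact: Lip0_0.
have lg : lipnorm d g <= 1.
  apply: lipnorm_le => x y xy; rewrite /g !add0r -mulrBr normrM.
  rewrite (gtr0_norm lip) -mulrA.
  rewrite ler_pdivrMl // mulr1; exact: lip_elem Lf xy.
have : `|F g| <= dual_norm d x0 F.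
  by apply: ub_le_sup; [exact: dset_ub|exists g].
rewrite Fg normrM (gtr0_norm lip) => h; have := ler_wpM2l (ltW lpos) h.
rewrite mulrA mulfV ?mul1r; last by rewrite gt_eqF.
by rewrite mulrC.
Qed.

Lemma F_dom f b : Lip0 d x0 f -> (forall t, `|deLeeuw d f t| <= b) ->
  F f <= dual_norm d x0 F * b.
Proof.
move=> Lf Hb; apply: le_trans (ler_norm _) _; apply: le_trans (F_le Lf) _.
apply: ler_wpM2l; first exact: dual_ge0.
apply: lipnorm_le => x y xy.
have := Hb (exist (fun p : M * M => p.1 <> p.2) (x, y) xy).
by rewrite /deLeeuw /= normrM normfV (gtr0_norm (d_pos hm xy)).
Qed.

End Dual.

Theorem proposition2p4 (R : realType) (M : Type) (d : M -> M -> R) (x0 : M) :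
  is_metric d ->
  (forall nu : set (Mtilde M) -> R, is_ba nu ->
     exists mu : set (Mtilde M) -> R,
       is_ba mu /\ positive_measure mu /\
       (forall f, Lip0 d x0 f -> Phistar d mu f = Phistar d nu f) /\
       ba_norm mu = ba_norm nu) /\
  (forall F : (M -> R) -> R, Lip0_dual d x0 F ->
     exists mu : set (Mtilde M) -> R,
       is_ba mu /\ positive_measure mu /\
       (forall f, Lip0 d x0 f -> Phistar d mu f = F f) /\
       ba_norm mu = dual_norm d x0 F).
Proof.
move=> hm.
have [tT|nT] := pselect (exists t : Mtilde M, True).
  have txy : exists x y : M, x <> y.
    by have [[[x y] /= xy] _] := tT; exists x, y.
  split.
    move=> nu [n0 [nadd [C nbdd]]].
    apply: (gen_repr hm tT (K := ba_norm nu) (V := Phistar d nu)).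
    - by have := norm_ge0 n0 nadd nbdd.
    - move=> f g a Lf Lg; rewrite /Phistar Phi_lin.
      by have := ba_lin n0 nadd nbdd a (Phi_bdd hm Lf) (Phi_bdd hm Lg).
    - move=> f b Lf Hb; rewrite /Phistar.
      have b0 : 0 <= b by have [t _] := tT; exact: le_trans (normr_ge0 _) (Hb t).
      have := ba_bound n0 nadd nbdd Hb b0.
      by rewrite ler_norml mulrC => /andP[_ h].
  move=> F [Flin [C FC]].
  apply: (gen_repr hm tT (K := dual_norm d x0 F) (V := F)).
  - by have := dual_ge0 hm txy Flin FC.
  - exact: Flin.
  - by move=> f b Lf Hb; have := F_dom hm txy Flin FC Lf Hb.
have allset : forall A : set (Mtilde M), A = set0.
  by move=> A; apply/seteqP; split => t // _; apply: nT; exists t.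
have alleq : forall x y : M, x = y.
  move=> x y; have [//|xy] := pselect (x = y); exfalso; apply: nT.
  by exists (exist (fun p : M * M => p.1 <> p.2) (x, y) xy).
split.
  move=> nu hnu; exists nu; split => //; split => //.
  move=> A; rewrite (allset A); case: hnu => -> _; exact: lexx.
move=> F [Flin [C FC]].
have F0 : F (fun _ => 0) = 0.
  have h := Flin _ _ 1 (Lip0_0 d x0) (Lip0_0 d x0).
  have e : (fun x : M => (fun _ : M => 0 : R) x + 1 * (fun _ => 0) x) = (fun _ => 0).
    by apply/funext => x; rewrite mulr0 addr0.
  rewrite e in h; lra.
have Lz : forall f, Lip0 d x0 f -> f = (fun _ => 0).
  by move=> f [_ f0]; apply/funext => x; rewrite (alleq x x0).
exists (fun _ => 0); split; [|split; [|split]].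
- split => //; split; first by move=> *; rewrite addr0.
  by exists 0 => A; rewrite normr0.
- by move=> A.
- move=> f Lf; rewrite (Lz f Lf) F0 /Phistar.
  apply: ba_integralE; first by exists 0 => t; exfalso; apply: nT; exists t.
  move=> e ep; exists 1; split => // s _ _.
  by rewrite big1 ?subrr ?normr0 ?ltW // => p _; rewrite mulr0.
- have -> : ba_norm (fun _ : set (Mtilde M) => 0 : R) = 0.
    rewrite /ba_norm; rewrite (_ : [set r | _] = [set 0]) ?sup1 //.
    apply/seteqP; split => r /=.
      by move=> [s [_ ->]]; rewrite big1 // => A _; rewrite normr0.
    by move=> ->; exists [:: setT]; split; [exact: partT|rewrite big_seq1 normr0].
  rewrite /dual_norm (_ : [set r | _] = [set 0]) ?sup1 //.
  apply/seteqP; split => r /=.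
    by move=> [f [Lf [_ ->]]]; rewrite (Lz f Lf) F0 normr0.
  move=> ->; exists (fun _ => 0); split; first exact: Lip0_0.
  split; last by rewrite F0 normr0.
  rewrite /lipnorm (_ : [set z | _] = set0) ?sup0 //.
  by apply/seteqP; split => z // [x [y [xy _]]]; apply: xy; exact: alleq.
Qed.
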